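(* Let $d\geq 2$ and $m\geq 1$ be integers. Let $\{e^d_k\}$ and $\{e^{d+m}_k\}$ be the standard bases of $\mathbb{C}^d$ and $\mathbb{C}^{d+m}$, and let $|J\rangle=\sum_{k=1}^d e^d_k$. Define $d\times(d+m)$ matrices $$V_i=\sum_{k=1}^{d}|e^d_k\rangle\langle e^{d+m}_{\mathrm{mod}(k+i-2,\,d+1)+1}|\quad (i=1,\dots,d+1),\qquad V_i=|J\rangle\langle e^{d+m}_i|\quad (i=d+2,\dots,d+m),$$ where $\mathrm{mod}(a,n)\in\{0,\dots,n-1\}$ is the remainder of $a$ modulo $n$, and let $\Phi:M_d\to M_{d+m}$ be $\Phi(X)=\frac{1}{d(d+m)}\sum_{i=1}^{d+m}V_i^\dagger XV_i$. Then the entanglement breaking rank of $\Phi$ equals $d+m$.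
   Context: $M_n$ denotes the complex $n\times n$ matrices. A completely positive map is entanglement breaking if its Choi matrix $\sum_{r,s}E_{rs}\otimes\Phi(E_{rs})$ is separable; equivalently, it admits a Kraus decomposition with all Kraus operators of rank one. The entanglement breaking rank of an entanglement breaking map $\Phi$ is the smallest $N$ such that $\Phi(X)=\sum_{i=1}^N R_iXR_i^\dagger$ with every $R_i$ of rank one. *)

(* Defs.v *)
From HB Require Import structures.
From mathcomp Require Import all_boot all_order all_algebra.
From mathcomp Require Import complex.
Set Implicit Arguments. Unset Strict Implicit. Unset Printing Implicit Defensive.
Import Order.TTheory GRing.Theory Num.Theory.
Local Open Scope ring_scope.

Definition adjmx (C : numClosedFieldType) (p q : nat) (A : 'M[C]_(p, q)) : 'M[C]_(q, p) :=
  (map_mx Num.conj A)^T.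

Definition eb_kraus_rank1 (C : numClosedFieldType) (n p : nat)
  (Phi : 'M[C]_n -> 'M[C]_p) (N : nat) : Prop :=
  exists Rk : 'I_N -> 'M[C]_(p, n),
    (forall i, \rank (Rk i) = 1%N) /\
    (forall X : 'M[C]_n, Phi X = \sum_(i < N) Rk i *m X *m adjmx (Rk i)).

Definition is_eb_rank (C : numClosedFieldType) (n p : nat)
  (Phi : 'M[C]_n -> 'M[C]_p) (N : nat) : Prop :=
  eb_kraus_rank1 Phi N /\ (forall N', eb_kraus_rank1 Phi N' -> (N <= N')%N).

(* V_i (0-indexed i : 'I_(d+m), rows k : 'I_d, columns j : 'I_(d+m)):
   for i < d+1 (paper's i = 1..d+1): entry (k,j) = 1 iff j = (k + i) mod (d+1);
   for i >= d+1 (paper's i = d+2..d+m): V_i = |J><e_i|, entry (k,j) = 1 iff j = i. *)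
Definition Vop (C : numClosedFieldType) (d m : nat) (i : 'I_(d + m)) : 'M[C]_(d, d + m) :=
  \matrix_(k < d, j < d + m)
    (if (i < d.+1)%N then ((j : nat) == ((k + i) %% d.+1)%N)%:R
     else ((j : nat) == (i : nat))%:R).

Definition Phi (C : numClosedFieldType) (d m : nat) (X : 'M[C]_d) : 'M[C]_(d + m) :=
  ((d * (d + m))%:R)^-1 *: \sum_(i < d + m) adjmx (@Vop C d m i) *m X *m @Vop C d m i.

(* Main.v *)
Require Import Defs.
From HB Require Import structures.
From mathcomp Require Import all_boot all_order all_algebra.
From mathcomp Require Import complex cyclic separable cyclotomic zify ring.
Set Implicit Arguments. Unset Strict Implicit. Unset Printing Implicit Defensive.
Import Order.TTheory GRing.Theory Num.Theory.
Local Open Scope ring_scope.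

Lemma mul3E (C : pzRingType) p q r s (A : 'M[C]_(p, q)) (X : 'M[C]_(q, r)) (B : 'M[C]_(r, s)) a b :
  (A *m X *m B) a b = \sum_k \sum_j A a k * X k j * B j b.
Proof.
rewrite mxE; under eq_bigr => j _ do rewrite mxE big_distrl /=.
by rewrite exchange_big.
Qed.

Section LB.
Variables (C : numClosedFieldType) (p n : nat).

Lemma adjmxE (q r : nat) (A : 'M[C]_(q, r)) i j : adjmx A i j = (A j i)^*.
Proof. by rewrite /adjmx !mxE. Qed.

Definition krausmx N (K : 'I_N -> 'M[C]_(p, n)) : 'M[C]_(N, p * n) :=
  \matrix_(i, u) mxvec (K i) 0 u.
Definition choi N (K : 'I_N -> 'M[C]_(p, n)) : 'M[C]_(p * n) :=
  (krausmx K)^T *m map_mx Num.conj (krausmx K).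

Lemma choiE N K a k b l :
  @choi N K (mxvec_index a k) (mxvec_index b l) = \sum_i K i a k * (K i b l)^*.
Proof.
rewrite mxE; apply: eq_bigr => i _; by rewrite !mxE !mxvecE.
Qed.

Lemma choi_rank N K : (\rank (@choi N K) <= N)%N.
Proof. exact: leq_trans (mxrankM_maxl _ _) (rank_leq_col _). Qed.

Lemma kraus_entry N (K : 'I_N -> 'M[C]_(p, n)) (Ph : 'M[C]_n -> 'M[C]_p) :
  (forall X, Ph X = \sum_(i < N) K i *m X *m adjmx (K i)) ->
  forall a k b l, Ph (delta_mx k l) a b = \sum_i K i a k * (K i b l)^*.
Proof.
move=> H a k b l; rewrite H summxE; apply: eq_bigr => i _; rewrite mul3E.
rewrite (bigD1 k) //= [X in _ + X]big1 ?addr0; last first.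
  by move=> k' nk; apply: big1 => l' _; rewrite mxE (negbTE nk) mulr0 mul0r.
rewrite (bigD1 l) //= [X in _ + X]big1 ?addr0; last first.
  by move=> l' nl; rewrite mxE (negbTE nl) andbF mulr0 mul0r.
by rewrite mxE !eqxx mulr1 adjmxE.
Qed.

Lemma choi_unique N N' K K' (Ph : 'M[C]_n -> 'M[C]_p) :
  (forall X, Ph X = \sum_(i < N) K i *m X *m adjmx (K i)) ->
  (forall X, Ph X = \sum_(i < N') K' i *m X *m adjmx (K' i)) ->
  @choi N K = @choi N' K'.
Proof.
move=> H H'; apply/matrixP => u v.
case/mxvec_indexP: u => a k; case/mxvec_indexP: v => b l.
by rewrite !choiE -(kraus_entry H) -(kraus_entry H').
Qed.

Lemma choi_rank_ge N K (g : C) : g != 0 ->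
  map_mx Num.conj (krausmx K) *m (krausmx K)^T = g%:M ->
  (N <= \rank (@choi N K))%N.
Proof.
move=> g0 HG.
have E : map_mx Num.conj (krausmx K) *m choi K *m (krausmx K)^T = (g * g)%:M.
  by rewrite /choi !mulmxA HG -mulmxA HG scalar_mxM.
have : \rank ((g * g)%:M : 'M[C]_N) = N.
  by apply: mxrank_unit; rewrite unitmxE det_scalar unitfE expf_neq0 // mulf_neq0.
move=> HN; rewrite -{1}HN -E.
exact: leq_trans (mxrankM_maxl _ _) (mxrankM_maxr _ _).
Qed.

Lemma gram_entry N K i j :
  (map_mx Num.conj (@krausmx N K) *m (krausmx K)^T) i j =
  \sum_(a < p) \sum_(k < n) (K i a k)^* * K j a k.
Proof.
rewrite mxE pair_bigA /=.
rewrite (reindex (fun x : 'I_p * 'I_n => mxvec_index x.1 x.2)) /=; last first.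
  case: (curry_mxvec_bij p n) => f h1 h2; exists f => [x _|u _]; [ case: x => x y; exact: (h1 (x, y)) | by move: (h2 u isT); case: (f u) ].
apply: eq_big => // -[x y] _; by rewrite !mxE !mxvecE.
Qed.
End LB.

Lemma kraus_eq (C : numClosedFieldType) p n N (K K' : 'I_N -> 'M[C]_(p, n)) :
  (forall a k b j, \sum_i K i a k * (K i b j)^* = \sum_i K' i a k * (K' i b j)^*) ->
  forall X, \sum_(i < N) K i *m X *m adjmx (K i) = \sum_(i < N) K' i *m X *m adjmx (K' i).
Proof.
move=> H X; apply/matrixP => a b; rewrite !summxE.
have E (L : 'I_N -> 'M[C]_(p, n)) : \sum_i (L i *m X *m adjmx (L i)) a b =
    \sum_k \sum_j X k j * \sum_i L i a k * (L i b j)^*.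
  under eq_bigr => i _ do rewrite mul3E.
  rewrite exchange_big /=; apply: eq_bigr => k _.
  rewrite exchange_big /=; apply: eq_bigr => j _.
  rewrite mulr_sumr; apply: eq_bigr => i _.
  by rewrite adjmxE mulrCA mulrA.
by rewrite !E; apply: eq_bigr => k _; apply: eq_bigr => j _; rewrite H.
Qed.

Lemma sum_eq2 (C : pzRingType) P (x y : nat) : (x < P)%N ->
  \sum_(a < P) (((a : nat) == x)%:R * ((a : nat) == y)%:R : C) = (x == y)%:R.
Proof.
move=> hx; rewrite (bigD1 (Ordinal hx)) //= [X in _ + X]big1 ?addr0 ?eqxx ?mul1r //.
by move=> a na; rewrite -val_eqE /= in na; rewrite (negbTE na) mul0r.
Qed.

Section Main.
Variables (C : numClosedFieldType) (d m : nat).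
Hypotheses (hd : (0 < d)%N) (hm : (0 < m)%N).
Local Notation n := d.+1.

Definition tt (i : 'I_(d + m)) (k : 'I_d) : nat := if (i < n)%N then ((k + i) %% n)%N else i.

Lemma VopE i k a : @Vop C d m i k a = ((a : nat) == tt i k)%:R.
Proof. by rewrite mxE /tt; case: ifP. Qed.

Lemma tt_lt i k : (tt i k < d + m)%N.
Proof.
rewrite /tt; case: ifP => // _.
by apply: leq_trans (ltn_pmod _ _) _; rewrite // -addn1 leq_add2l.
Qed.

Lemma tt_inj i j k : (tt i k == tt j k) = (i == j).
Proof.
rewrite /tt -val_eqE /=.
case: ifP => hi; case: ifP => hj.
- by rewrite eqn_modDl !modn_small.
- apply/idP/idP => /eqP h.
    by move: (ltn_pmod (k + i) (ltn0Sn d)); rewrite h hj.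
  by move: hi hj; rewrite h => ->.
- apply/idP/idP => /eqP h.
    by move: (ltn_pmod (k + j) (ltn0Sn d)); rewrite -h hi.
  by move: hi hj; rewrite h => ->.
- by [].
Qed.

Definition cc : C := ((d * (d + m))%:R)^-1.
Lemma cc_gt0 : 0 < cc.
Proof. by rewrite invr_gt0 ltr0n muln_gt0 hd addn_gt0 hd. Qed.
Definition bb : C := sqrtC cc.
Lemma bb_conj : bb^* = bb.
Proof. by rewrite geC0_conj // sqrtC_ge0 ltW // cc_gt0. Qed.
Lemma bb2 : bb * bb = cc.
Proof. by rewrite -expr2 sqrtCK. Qed.

Definition Kv (i : 'I_(d + m)) : 'M[C]_(d + m, d) := bb *: adjmx (@Vop C d m i).

Lemma KvE i a k : Kv i a k = bb * ((a : nat) == tt i k)%:R.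
Proof. by rewrite /Kv [LHS]mxE adjmxE VopE conjC_nat. Qed.

Lemma KvcE i a k : (Kv i a k)^* = bb * ((a : nat) == tt i k)%:R.
Proof. by rewrite KvE rmorphM rmorph_nat -[in RHS]bb_conj. Qed.

Lemma adjmxZ p q (a : C) (A : 'M[C]_(p, q)) : adjmx (a *: A) = a^* *: adjmx A.
Proof. by apply/matrixP => i j; rewrite !mxE rmorphM. Qed.
Lemma adjmxK p q (A : 'M[C]_(p, q)) : adjmx (adjmx A) = A.
Proof. by apply/matrixP => i j; rewrite !mxE conjCK. Qed.

Lemma Phi_Kv X : @Phi C d m X = \sum_(i < d + m) Kv i *m X *m adjmx (Kv i).
Proof.
rewrite /Phi scaler_sumr; apply: eq_bigr => i _.
rewrite /Kv adjmxZ adjmxK bb_conj -scalemxAl -scalemxAl.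
by rewrite -scalemxAr scalerA bb2.
Qed.

Lemma gram_Kv : map_mx Num.conj (krausmx Kv) *m (krausmx Kv)^T = (cc * d%:R)%:M.
Proof.
apply/matrixP => i j; rewrite gram_entry exchange_big /=.
rewrite [RHS]mxE.
have -> : \sum_(k < d) \sum_(a < d + m) (Kv i a k)^* * Kv j a k =
          \sum_(k < d) cc * (i == j)%:R.
  apply: eq_bigr => k _.
  under eq_bigr => a _ do rewrite KvcE KvE mulrACA bb2.
  by rewrite -mulr_sumr sum_eq2 ?tt_lt // tt_inj.
rewrite sumr_const card_ord.
by case: (i == j); rewrite /= ?mulr1 ?mulr0 ?mul0rn ?mulr_natr.
Qed.

Lemma rank_lower N' (K : 'I_N' -> 'M[C]_(d + m, d)) :
  (forall X, @Phi C d m X = \sum_(i < N') K i *m X *m adjmx (K i)) ->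
  (d + m <= N')%N.
Proof.
move=> HK.
have g0 : cc * d%:R != 0 by rewrite mulf_neq0 ?pnatr_eq0 -?lt0n // gt_eqF // cc_gt0.
apply: leq_trans (choi_rank_ge g0 gram_Kv) _.
by rewrite (choi_unique Phi_Kv HK) choi_rank.
Qed.
End Main.
Lemma geo (C : numClosedFieldType) n (w : C) : n.-primitive_root w -> forall e,
  \sum_(i < n) w ^+ (i * e)%N = (n %| e)%:R * n%:R.
Proof.
move=> hw e.
under eq_bigr => i _ do rewrite mulnC exprM.
have := prim_order_dvd hw e; case: (n %| e)%N => /= He.
  rewrite (eqP (esym He)) (eq_bigr (fun _ => 1)); last first. move=> i _. by rewrite expr1n.
  by rewrite sumr_const card_ord mul1r.
have h1 : (w ^+ e) ^+ n = 1 by rewrite -exprM mulnC exprM (prim_expr_order hw) expr1n.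
have := subrX1 (w ^+ e) n.
rewrite h1 subrr => /esym/eqP.
by rewrite mulf_eq0 subr_eq0 -He /= mul0r => /eqP.
Qed.

Lemma conj_prim (C : numClosedFieldType) n (w : C) : n.-primitive_root w -> w ^* = w ^+ n.-1.
Proof.
move=> hw; have n0 := prim_order_gt0 hw.
have w1 : `|w| = 1.
  apply/eqP; rewrite -(pexpr_eq1 n0) // -normrX prim_expr_order // normr1 //.
have w0 : w != 0 by apply: contra_eq_neq w1 => ->; rewrite normr0 eq_sym oner_neq0.
apply: (mulfI w0).
have := normCK w; rewrite w1 expr1n => <-.
by rewrite -exprS prednK // prim_expr_order.
Qed.


Section Mod.
Local Open Scope nat_scope.
Variable d : nat.
Local Notation n := d.+1.

Lemma modA (a k i : nat) : a < n -> i < n ->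
  (a == (k + i) %% n) = (i == (a + d * k) %% n).
Proof.
move=> an iN.
have -> : (a == (k + i) %% n) = (a == k + i %[mod n]) by rewrite (modn_small an).
have -> : (i == (a + d * k) %% n) = (i == a + d * k %[mod n]) by rewrite (modn_small iN).
rewrite -(eqn_modDr (d * k)).
have -> : k + i + d * k = k * n + i by rewrite mulnS; lia.
by rewrite modnMDl eq_sym.
Qed.

Lemma modB (a b j k : nat) : b < n ->
  (b == (j + (a + d * k) %% n) %% n) = (n %| a + j + d * (k + b)).
Proof.
move=> bn.
rewrite modnDmr.
have -> : (b == (j + (a + d * k)) %% n) = (b == (j + (a + d * k)) %[mod n]) by rewrite (modn_small bn).
rewrite -(eqn_modDr (d * b)).
have -> : b + d * b = n * b by rewrite mulSn.
rewrite modnMr /dvdn eq_sym.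
have -> : a + j + d * (k + b) = j + (a + d * k) + d * b by rewrite mulnDr; lia.
by [].
Qed.
End Mod.
Lemma prim_root_exists (C : numClosedFieldType) n : (n > 0)%N -> {z : C | n.-primitive_root z}.
Proof.
pose p : {poly C} := 'X^n - 1; have [r Dp] := closed_field_poly_normal p.
move=> n_gt0; apply/sigW; rewrite (monicP _) ?monicXnsubC // scale1r in Dp.
have rn1: all n.-unity_root r by apply/allP=> z; rewrite -root_prod_XsubC -Dp.
have sz_r: (n < (size r).+1)%N.
  by rewrite -(size_prod_XsubC r id) -Dp size_XnsubC.
have [|z] := hasP (has_prim_root n_gt0 rn1 _ sz_r); last by exists z.
by rewrite -separable_prod_XsubC -Dp separable_Xn_sub_1 // pnatr_eq0 -lt0n.
Qed.

Section Upper.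
Variables (C : numClosedFieldType) (d m : nat).
Hypotheses (hd : (0 < d)%N) (hm : (0 < m)%N).
Local Notation n := d.+1.
Variable w : C.
Hypothesis hw : n.-primitive_root w.

Local Notation cc := (@cc C d m).
Local Notation bb := (@bb C d m).

Lemma conjM (x y : C) : (x * y)^* = x^* * y^*.
Proof. exact: rmorphM. Qed.
Lemma conjX (k : nat) : (w ^+ k)^* = w ^+ (d * k)%N.
Proof. by rewrite rmorphXn /= (conj_prim hw) exprM. Qed.
Lemma bbnat (x : nat) : (bb * x%:R)^* = bb * x%:R.
Proof. by rewrite conjM conjC_nat bb_conj. Qed.

Definition aa : C := sqrtC (cc / n%:R).
Lemma aa_gt0 : 0 < aa.
Proof. by rewrite sqrtC_gt0 divr_gt0 ?ltr0n // cc_gt0. Qed.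
Lemma aa_conj : aa^* = aa.
Proof. by rewrite geC0_conj // ltW // aa_gt0. Qed.
Lemma aa2 : aa * aa = cc / n%:R.
Proof. by rewrite -expr2 sqrtCK. Qed.

Definition uu (i : 'I_(d + m)) : 'cV[C]_(d + m) :=
  \col_a (if (i < n)%N then (if (a < n)%N then aa * w ^+ (a * i)%N else 0)
          else bb * ((a : nat) == i)%:R).
Definition vv (i : 'I_(d + m)) : 'rV[C]_d :=
  \row_k (if (i < n)%N then (w ^+ (k * i)%N)^* else 1).
Definition RR i := uu i *m vv i.

Lemma RRE i a k : RR i a k = uu i a 0 * vv i 0 k.
Proof. by rewrite mxE big_ord1. Qed.

Lemma RR_rank i : \rank (RR i) = 1%N.
Proof.
apply/eqP; rewrite eqn_leq (leq_trans (mxrankM_maxr _ _) (rank_leq_row _)) /=.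
rewrite lt0n mxrank_eq0; apply/eqP => H.
have hdm : (0 < d + m)%N by rewrite addn_gt0 hd.
pose a0 : 'I_(d + m) := if (i < n)%N then Ordinal hdm else i.
have := congr1 (fun M : 'M[C]_(d + m, d) => M a0 (Ordinal hd)) H; rewrite RRE !mxE /a0.
case: ifP => hi /=.
  rewrite hi /= mul0n expr0 mulr1 rmorph1 mulr1 => /eqP.
  by rewrite gt_eqF // aa_gt0.
rewrite hi eqxx mulr1 mulr1 => /eqP; rewrite gt_eqF //.
by rewrite sqrtC_gt0 cc_gt0.
Qed.

Lemma coef_eq (a : 'I_(d + m)) (k : 'I_d) (b : 'I_(d + m)) (j : 'I_d) :
  \sum_i @Kv C d m i a k * (@Kv C d m i b j)^* = \sum_i RR i a k * (RR i b j)^*.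
Proof.
rewrite [LHS](bigID (fun i : 'I_(d + m) => (i < n)%N)) [RHS](bigID (fun i : 'I_(d + m) => (i < n)%N)) /=.
congr (_ + _); last first.
  apply: eq_bigr => i /negbTE hi.
  rewrite KvE // KvcE // !RRE !mxE /tt hi !mulr1 bbnat //.
pose e := (a + j + d * (k + b))%N.
rewrite (eq_bigr (fun i : 'I_(d + m) => cc * (((a : nat) == ((k + i) %% n)%N)%:R * (((b : nat) == ((j + i) %% n)%N)%:R)))); last first.
  by move=> i hi; rewrite KvE // KvcE // /tt hi mulrACA bb2.
rewrite [RHS](eq_bigr (fun i : 'I_(d + m) => if ((a < n) && (b < n))%N then aa * aa * w ^+ (i * e)%N else 0)); last first.
  move=> i hi; rewrite !RRE !mxE hi.
  case: ifP => ha; last by rewrite !mul0r.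
  case: ifP => hb; last by rewrite mul0r rmorph0 mulr0.
  rewrite /= !conjM conjCK !conjX aa_conj.
  have -> : w ^+ (i * e)%N = w ^+ (a * i)%N * w ^+ (d * (k * i))%N * w ^+ (d * (b * i))%N * w ^+ (j * i)%N.
    by rewrite -!exprD; congr (_ ^+ _); rewrite /e; nia.
  by rewrite !mulrA; ring.
have le_n : (n <= d + m)%N by rewrite -addn1 leq_add2l.
rewrite -(big_ord_widen (d + m) (fun i : nat => cc * (((a : nat) == ((k + i) %% n)%N)%:R * (((b : nat) == ((j + i) %% n)%N)%:R))) le_n).
rewrite -(big_ord_widen (d + m) (fun i : nat => if ((a < n) && (b < n))%N then aa * aa * w ^+ (i * e)%N else 0) le_n).
case hab: ((a < n) && (b < n))%N; last first.
  rewrite big1 ?big1 // => i _.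
  case/nandP: (negbT hab) => [ha|hb].
    have -> : ((a : nat) == ((k + i) %% n)%N) = false.
      by apply/negbTE; apply: contra ha => /eqP ->; rewrite ltn_pmod.
    by rewrite mul0r mulr0.
  have -> : ((b : nat) == ((j + i) %% n)%N) = false.
    by apply/negbTE; apply: contra hb => /eqP ->; rewrite ltn_pmod.
  by rewrite mulr0 mulr0.
case/andP: hab => ha hb.
rewrite /= -mulr_sumr -[RHS]mulr_sumr (geo hw).
have i0n : ((a + d * k) %% n < n)%N by rewrite ltn_pmod.
rewrite (bigD1 (Ordinal i0n)) //= [X in _ + X]big1 ?addr0; last first.
  move=> i ni; rewrite modA //; rewrite -val_eqE /= in ni; by rewrite (negbTE ni) mul0r.
rewrite modA // eqxx mul1r modB //.
rewrite aa2 /e; field; by rewrite addrC natr1 pnatr_eq0.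
Qed.

Lemma Phi_RR X : @Phi C d m X = \sum_(i < d + m) RR i *m X *m adjmx (RR i).
Proof. by rewrite Phi_Kv //; apply: kraus_eq => a k b j; exact: coef_eq. Qed.
End Upper.

Local Open Scope complex_scope.

Theorem mainTheorem4 (R : rcfType) (d m : nat) :
  (2 <= d)%N -> (1 <= m)%N ->
  is_eb_rank (@Phi R[i] d m) (d + m)%N.
Proof.
move=> hd hm.
have hd0 : (0 < d)%N by apply: leq_trans hd.
have [w hw] := @prim_root_exists R[i] d.+1 (ltn0Sn d).
split.
  exists (fun i : 'I_(d + m) => RR w i); split; first by move=> i; exact: RR_rank.
  move=> X; rewrite (Phi_RR hd0 hm hw). done.
move=> N' [K [_ HK]]; have := @rank_lower R[i] d m hd0 hm N' K HK. by [].
Qed.
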